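(* Let $k\geq 2$ be an integer and let $f\colon\mathbb{N}_0\to\{0,1\}$ be given by $f(n)=\lfloor\sqrt{n}\rfloor \bmod 2$. Then $f$ is not asymptotically $k$-automatic.
   Context: $\mathbb{N}_0=\{0,1,2,\dots\}$. A property holds for almost all $n\in\mathbb{N}_0$ if the set of $n$ where it fails has upper density $\limsup_{N\to\infty}|\cdot\cap\{0,\dots,N-1\}|/N$ equal to $0$. Sequences $f,g$ are asymptotically equal, $f\simeq g$, if $f(n)=g(n)$ for almost all $n$. The $k$-kernel of $f$ is $\mathcal{N}_k(f) = \{ n \mapsto f(k^\alpha n + r) : \alpha, r \in \mathbb{N}_0,\ r < k^\alpha\}$; $f$ is asymptotically $k$-automatic if $\mathcal{N}_k(f)/{\simeq}$ is finite. *)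

(* Defs.v *)
From Stdlib Require Import Reals Arith List.
From Coquelicot Require Import Coquelicot.
Open Scope R_scope.

Fixpoint count_below (P : nat -> bool) (N : nat) : nat :=
  match N with
  | O => O
  | S M => (count_below P M + (if P M then 1 else 0))%nat
  end.

Definition upper_density_zero (P : nat -> bool) : Prop :=
  LimSup_seq (fun N => INR (count_below P N) / INR N) = Finite 0.

Definition asym_eq (f g : nat -> nat) : Prop :=
  upper_density_zero (fun n => negb (Nat.eqb (f n) (g n))).

Definition kernel_elt (k : nat) (f : nat -> nat) (alpha r : nat) : nat -> nat :=
  fun n => f (k ^ alpha * n + r)%nat.

(* N_k(f)/≃ is finite: finitely many ≃-classes cover the k-kernel *)
Definition asymptotically_automatic (k : nat) (f : nat -> nat) : Prop :=
  exists reps : list (nat -> nat),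
    forall alpha r : nat, (r < k ^ alpha)%nat ->
      exists g, In g reps /\ asym_eq (kernel_elt k f alpha r) g.

(* Main.v *)
Require Import Defs.
From Stdlib Require Import Reals Arith List.
From Coquelicot Require Import Coquelicot.
From Stdlib Require Import Lia Lra Classical.

Lemma eventually_small (P : nat -> bool) (eps : posreal) :
  upper_density_zero P ->
  exists N0, forall N, (N0 <= N)%nat -> INR (count_below P N) / INR N < eps.
Proof.
  unfold upper_density_zero. intros H.
  destruct (ex_LimSup_seq (fun N => INR (count_below P N) / INR N)) as [l Hl].
  pose proof (is_LimSup_seq_unique _ _ Hl) as E. rewrite H in E. subst l.
  destruct (Hl eps) as [_ [N0 HN]]. exists N0. intros N HN0.
  specialize (HN N HN0). lra.
Qed.

Lemma small_nat (c N m : nat) : (0 < N)%nat -> (0 < m)%nat ->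
  INR c / INR N < / INR m -> (c * m < N)%nat.
Proof.
  intros HN Hm H. apply INR_lt. rewrite mult_INR.
  apply lt_0_INR in HN. apply lt_0_INR in Hm.
  apply (Rmult_lt_compat_r (INR N * INR m)) in H; [|nra].
  replace (INR c / INR N * (INR N * INR m)) with (INR c * INR m) in H by (field; lra).
  replace (/ INR m * (INR N * INR m)) with (INR N) in H by (field; lra).
  exact H.
Qed.

Lemma count_mono (P : nat -> bool) N M : (N <= M)%nat -> (count_below P N <= count_below P M)%nat.
Proof. induction 1; simpl; lia. Qed.

Lemma count_block (P : nat -> bool) a b :
  (forall t, (a <= t < a + b)%nat -> P t = true) ->
  (count_below P a + b <= count_below P (a + b))%nat.
Proof.
  induction b; intros H.
  - rewrite !Nat.add_0_r; lia.
  - replace (a + S b)%nat with (S (a + b)) by lia. simpl. rewrite (H (a + b)%nat) by lia.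
    assert (count_below P a + b <= count_below P (a + b))%nat by (apply IHb; intros; apply H; lia).
    lia.
Qed.

Lemma count_sub (P Q R : nat -> bool) N :
  (forall n, P n = true -> Q n = true \/ R n = true) ->
  (count_below P N <= count_below Q N + count_below R N)%nat.
Proof.
  intros H. induction N; simpl; [lia|].
  destruct (P N) eqn:E; [|lia].
  destruct (H N E) as [-> | ->]; [destruct (R N)|destruct (Q N)]; lia.
Qed.

Lemma NoDup_remove_nat {x : nat} {l : list nat} : NoDup l -> NoDup (remove Nat.eq_dec x l).
Proof.
  induction 1; simpl; [constructor|].
  destruct (Nat.eq_dec x x0); [assumption|].
  constructor; [|assumption]. intros Hin. apply in_remove in Hin. tauto.
Qed.

Lemma remove_len_nodup (a0 : nat) (Sl : list nat) : NoDup Sl -> In a0 Sl ->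
  length Sl = S (length (remove Nat.eq_dec a0 Sl)).
Proof.
  induction Sl as [|x Sl IHS]; intros HS Ha0; [destruct Ha0|].
  inversion HS; subst. simpl. destruct (Nat.eq_dec a0 x).
  - subst. rewrite notin_remove by assumption. reflexivity.
  - simpl. destruct Ha0 as [->|Ha0]; [congruence|]. rewrite IHS; auto.
Qed.

Lemma php (R : nat -> (nat -> nat) -> Prop) (L : list (nat -> nat)) :
  forall Sl : list nat, NoDup Sl -> (length L < length Sl)%nat ->
  (forall a, In a Sl -> exists g, In g L /\ R a g) ->
  exists a b g, In a Sl /\ In b Sl /\ a <> b /\ R a g /\ R b g.
Proof.
  induction L as [|g L IH]; intros Sl HS Hlen Hall.
  - destruct Sl as [|a Sl]; simpl in Hlen; [lia|].
    destruct (Hall a (or_introl eq_refl)) as [g [[] _]].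
  - destruct (classic (exists a b, In a Sl /\ In b Sl /\ a <> b /\ R a g /\ R b g)) as
      [[a [b Hab]]|Hno].
    + exists a, b, g; tauto.
    + destruct (classic (exists a0, In a0 Sl /\ R a0 g)) as [[a0 [Ha0 Ra0]]|Hno2].
      * assert (Hlen' : (length L < length (remove Nat.eq_dec a0 Sl))%nat).
        { clear -HS Ha0 Hlen.
          pose proof (remove_len_nodup a0 Sl HS Ha0).
          simpl in Hlen. lia. }
        destruct (IH (remove Nat.eq_dec a0 Sl) (NoDup_remove_nat HS) Hlen') as [a [b [g' H]]].
        -- intros a Ha. apply in_remove in Ha. destruct Ha as [Ha Hne].
           destruct (Hall a Ha) as [g' [[<-|Hg'] Rg']].
           ++ exfalso. apply Hno. exists a, a0. repeat split; auto.
           ++ eauto.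
        -- exists a, b, g'. destruct H as [H1 [H2 H3]].
           apply in_remove in H1. apply in_remove in H2. tauto.
      * apply (IH Sl HS); [simpl in Hlen; lia|].
        intros a Ha. destruct (Hall a Ha) as [g' [[<-|Hg'] Rg']].
        -- exfalso; apply Hno2; eauto.
        -- eauto.
Qed.
Local Open Scope nat_scope.
Lemma sqrt_K (K i t : nat) : 1 <= K -> 4*i+1 <= t <= 8*i ->
  Nat.sqrt (K*K*(4*K*K*i*i + t)) = 2*K*K*i+1.
Proof.
  intros HK Ht. apply Nat.sqrt_unique. split.
  - assert (K*K*t >= K*K*(4*i+1)) by (apply Nat.mul_le_mono_l; lia). nia.
  - assert (K*K*t <= K*K*(8*i)) by (apply Nat.mul_le_mono_l; lia). nia.
Qed.
Lemma sqrt_A (A K i t : nat) : 1 <= A -> 2*A <= K -> t <= 8*i ->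
  Nat.sqrt (A*A*(4*K*K*i*i + t)) = 2*A*K*i.
Proof.
  intros HA HK Ht. apply Nat.sqrt_unique. split.
  - nia.
  - assert (A*A*t <= A*A*(8*i)) by (apply Nat.mul_le_mono_l; lia).
    assert (A*(2*A)*i <= A*K*i) by (apply Nat.mul_le_mono_r, Nat.mul_le_mono_l; lia). nia.
Qed.
Lemma odd1 x : (2*x+1) mod 2 = 1.
Proof. replace (2*x+1) with (1 + x*2) by lia. rewrite Nat.Div0.mod_add. reflexivity. Qed.
Lemma even0 x : (2*x) mod 2 = 0.
Proof. replace (2*x) with (0 + x*2) by lia. rewrite Nat.Div0.mod_add. reflexivity. Qed.

Lemma count_grow (P : nat -> bool) (c : nat) : 4 <= c ->
  (forall i t, 4*i+1 <= t <= 8*i -> P (c*i*i + t) = true) ->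
  forall i, 2*i*(i-1) <= count_below P (c*i*i).
Proof.
  intros Hc HP. induction i as [|i IH]; [simpl; lia|].
  pose proof (count_block P (c*i*i + (4*i+1)) (4*i)) as HB.
  assert (H1 : count_below P (c*i*i + (4*i+1)) + 4*i <= count_below P (c*i*i + (4*i+1) + 4*i)).
  { apply HB. intros t Ht. replace t with (c*i*i + (t - c*i*i)) by lia. apply HP. lia. }
  pose proof (count_mono P (c*i*i) (c*i*i + (4*i+1)) ltac:(lia)).
  pose proof (count_mono P (c*i*i + (4*i+1) + 4*i) (c*S i*S i) ltac:(nia)).
  nia.
Qed.

Lemma contra (k : nat) (hk : 2 <= k) (a b : nat) (g : nat -> nat) : a < b ->
  asym_eq (kernel_elt k (fun n => Nat.sqrt n mod 2) (a+a) 0) g ->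
  asym_eq (kernel_elt k (fun n => Nat.sqrt n mod 2) (b+b) 0) g -> False.
Proof.
  intros Hab Ha Hb. unfold asym_eq in Ha, Hb.
  set (A := k^a). set (K := k^b).
  assert (HA : 1 <= A) by (apply Nat.neq_0_lt_0, Nat.pow_nonzero; lia).
  assert (HAK : 2*A <= K).
  { assert (k^(S a) <= K) by (apply Nat.pow_le_mono_r; lia).
    simpl in H. fold A in H. nia. }
  set (D := fun n => negb (Nat.eqb (kernel_elt k (fun n => Nat.sqrt n mod 2) (a+a) 0 n)
                                    (kernel_elt k (fun n => Nat.sqrt n mod 2) (b+b) 0 n))).
  assert (HD : forall i t, 4*i+1 <= t <= 8*i -> D (4*K*K*i*i + t) = true).
  { intros i t Ht. unfold D, kernel_elt. rewrite !Nat.pow_add_r. fold A K.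
    rewrite !Nat.add_0_r. rewrite sqrt_K by lia. rewrite sqrt_A by lia.
    rewrite <- !Nat.mul_assoc, odd1, even0. reflexivity. }
  assert (HK1 : 1 <= K) by lia.
  assert (Hpos : (0 < / INR (8*K*K))%R).
  { apply Rinv_0_lt_compat, lt_0_INR. nia. }
  destruct (eventually_small _ (mkposreal _ Hpos) Ha) as [N1 H1].
  destruct (eventually_small _ (mkposreal _ Hpos) Hb) as [N2 H2].
  set (i := N1 + N2 + 2).
  set (N := 4*K*K*i*i).
  assert (HN : N1 + N2 <= N).
  { assert (1 <= K*K) by nia. assert (i <= i*i) by nia.
    assert (i*i <= 4*K*K*i*i) by nia. unfold N, i in *; lia. }
  assert (HN2 : 2 <= N).
  { assert (1 <= K*K) by nia. assert (i <= i*i) by nia.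
    assert (i*i <= 4*K*K*i*i) by nia. unfold N, i in *; lia. }
  specialize (H1 N ltac:(lia)). specialize (H2 N ltac:(lia)).
  assert (H8 : 0 < 8*K*K) by nia.
  apply (small_nat _ N (8*K*K) ltac:(lia) H8) in H1.
  apply (small_nat _ N (8*K*K) ltac:(lia) H8) in H2.
  pose proof (count_grow D (4*K*K) ltac:(nia) HD i) as HG.
  pose proof (count_sub D
    (fun n => negb (Nat.eqb (kernel_elt k (fun n => Nat.sqrt n mod 2) (a+a) 0 n) (g n)))
    (fun n => negb (Nat.eqb (kernel_elt k (fun n => Nat.sqrt n mod 2) (b+b) 0 n) (g n))) N) as HS.
  assert (HS' : count_below D N <= count_below
    (fun n => negb (Nat.eqb (kernel_elt k (fun n => Nat.sqrt n mod 2) (a+a) 0 n) (g n))) N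
    + count_below (fun n => negb (Nat.eqb (kernel_elt k (fun n => Nat.sqrt n mod 2) (b+b) 0 n) (g n))) N).
  { apply HS. intros n. unfold D.
    destruct (Nat.eqb_spec (kernel_elt k (fun n => Nat.sqrt n mod 2) (a+a) 0 n) (g n));
    destruct (Nat.eqb_spec (kernel_elt k (fun n => Nat.sqrt n mod 2) (b+b) 0 n) (g n));
    destruct (Nat.eqb_spec (kernel_elt k (fun n => Nat.sqrt n mod 2) (a+a) 0 n)
                (kernel_elt k (fun n => Nat.sqrt n mod 2) (b+b) 0 n)); simpl; auto; congruence. }
  assert (HNe : 2 * N = (i*i) * (8*(K*K))) by (unfold N; ring).
  revert HG HS' H1 H2 HNe. unfold N.
  generalize (count_below D (4*K*K*i*i)).
  generalize (count_below (fun n => negb (Nat.eqb (kernel_elt k (fun n => Nat.sqrt n mod 2) (a+a) 0 n) (g n))) (4*K*K*i*i)).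
  generalize (count_below (fun n => negb (Nat.eqb (kernel_elt k (fun n => Nat.sqrt n mod 2) (b+b) 0 n) (g n))) (4*K*K*i*i)).
  intros c2 c1 cD HG HS' H1 H2 HNe.
  assert (Hs : (c1 + c2) * (8*(K*K)) < (i*i) * (8*(K*K))) by lia.
  apply Nat.mul_lt_mono_pos_r in Hs; [|lia].
  assert (2 <= i) by (unfold i; lia).
  nia.
Qed.

Theorem proposition5p1 (k : nat) (hk : (2 <= k)%nat) :
  ~ asymptotically_automatic k (fun n => Nat.sqrt n mod 2)%nat.
Proof.
  intros [reps Hreps].
  destruct (php (fun a g => asym_eq (kernel_elt k (fun n => Nat.sqrt n mod 2) (a+a) 0) g)
             reps (seq 0 (S (length reps))) (seq_NoDup _ _)) as [a [b [g [_ [_ [Hne [Ha Hb]]]]]]].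
  - rewrite length_seq. lia.
  - intros a _. apply Hreps. apply Nat.neq_0_lt_0, Nat.pow_nonzero; lia.
  - destruct (Nat.lt_gt_cases a b) as [[H|H] _]; [exact Hne|..].
    + exact (contra k hk a b g H Ha Hb).
    + exact (contra k hk b a g H Hb Ha).
Qed.
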